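(* Let $\rho>0$, $y\in\mathbb{R}^n$, and let $P_y\in\mathbb{R}^{n\times n}$ be any permutation matrix such that $\tilde y=P_y y$ satisfies $\tilde y_1\ge\tilde y_2\ge\cdots\ge\tilde y_n$. Then \[ S_\rho(y)=P_y^T\,\Pi_{\mathcal D}(P_y y-\rho w), \] where $w_k=n-2k+1$, $k=1,\dots,n$.
   Context: For $\rho>0$ and $y\in\mathbb{R}^n$, $S_\rho(y):=\operatorname{argmin}_{x\in\mathbb{R}^n}\big\{\tfrac12\|x-y\|^2+\rho\sum_{1\le i<j\le n}|x_i-x_j|\big\}$. $\mathcal D:=\{x\in\mathbb{R}^n : x_1\ge x_2\ge\cdots\ge x_n\}$ and $\Pi_{\mathcal D}$ is the Euclidean projection onto $\mathcal D$. *)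

(* Defs.v *)
From HB Require Import structures.
From mathcomp Require Import all_boot all_order all_algebra all_fingroup.
Set Implicit Arguments. Unset Strict Implicit. Unset Printing Implicit Defensive.
Import Order.TTheory GRing.Theory Num.Theory.
Local Open Scope ring_scope.

Definition sqdist (R : realFieldType) (n : nat) (x y : 'cV[R]_n) : R :=
  \sum_(i < n) (x i 0 - y i 0) ^+ 2.

Definition pairpen (R : realFieldType) (n : nat) (x : 'cV[R]_n) : R :=
  \sum_(i < n) \sum_(j < n | (i < j)%N) `|x i 0 - x j 0|.

Definition Sobj (R : realFieldType) (n : nat) (rho : R) (y x : 'cV[R]_n) : R :=
  2^-1 * sqdist x y + rho * pairpen x.

Definition is_S (R : realFieldType) (n : nat) (rho : R) (y x : 'cV[R]_n) : Prop :=
  forall z : 'cV[R]_n, Sobj rho y x <= Sobj rho y z.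

Definition inD (R : realFieldType) (n : nat) (x : 'cV[R]_n) : Prop :=
  forall i j : 'I_n, (i <= j)%N -> x j 0 <= x i 0.

Definition is_projD (R : realFieldType) (n : nat) (v p : 'cV[R]_n) : Prop :=
  inD p /\ forall q : 'cV[R]_n, inD q -> sqdist v p <= sqdist v q.

(* w_k = n - 2k + 1 for k = 1..n; with 0-based index i = k-1: n - 2i - 1 *)
Definition wvec (R : realFieldType) (n : nat) : 'cV[R]_n :=
  \col_(i < n) (n%:R - (2 * i + 1)%:R).

(* Main.v *)
Require Import Defs.
From HB Require Import structures.
From mathcomp Require Import all_boot all_order all_algebra all_fingroup.
From mathcomp Require Import ring lra zify.
Import Order.TTheory GRing.Theory Num.Theory.
Local Open Scope ring_scope.


Definition ps (R : realFieldType) (f : nat -> R) (k : nat) : R :=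
  \sum_(0 <= i < k) f i.
Arguments ps {R} f k.

Definition decn (R : realFieldType) (n : nat) (f : nat -> R) : Prop :=
  forall i j, (i <= j)%N -> (j < n)%N -> f j <= f i.
Arguments decn {R} n f.

Lemma abel (R : realFieldType) (z a : nat -> R) (m : nat) :
  \sum_(0 <= i < m.+1) z i * a i =
  z m * ps a m.+1 + \sum_(0 <= k < m) (z k - z k.+1) * ps a k.+1.
Proof.
elim: m => [|m IH].
  by rewrite /ps !big_nat1 big_geq // addr0.
rewrite big_nat_recr //= IH.
have -> : ps a m.+2 = ps a m.+1 + a m.+1 by rewrite /ps big_nat_recr.
rewrite (big_nat_recr m) //=.
ring.
Qed.

Lemma abel_ge0 (R : realFieldType) (n : nat) (z a : nat -> R) :
  decn n z -> ps a n = 0 -> (forall k, (k.+1 < n)%N -> 0 <= ps a k.+1) ->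
  0 <= \sum_(0 <= i < n) z i * a i.
Proof.
case: n => [|m] hz h0 hk; first by rewrite big_geq.
rewrite abel h0 mulr0 add0r big_seq; apply: sumr_ge0 => k; rewrite mem_iota add0n => /andP[_ hkm].
rewrite subn0 in hkm. apply: mulr_ge0; first by rewrite subr_ge0; apply: hz.
by apply: hk; rewrite ltnS.
Qed.

Lemma abel_eq0 (R : realFieldType) (n : nat) (p a : nat -> R) :
  decn n p -> ps a n = 0 ->
  (forall k, (k.+1 < n)%N -> p k.+1 < p k -> ps a k.+1 = 0) ->
  \sum_(0 <= i < n) p i * a i = 0.
Proof.
case: n => [|m] hz h0 hk; first by rewrite big_geq.
rewrite abel h0 mulr0 add0r; apply: big1_seq => k; rewrite mem_iota add0n subn0 => /andP[_ hkm].
have [hlt|hge] := ltP (p k.+1) (p k); first by rewrite hk // mulr0.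
have -> : p k = p k.+1 by apply/eqP; rewrite eq_le hge hz.
by rewrite subrr mul0r.
Qed.

Lemma ps_add (R : realFieldType) (f : nat -> R) a b :
  ps f (a + b) = ps f a + ps (fun i => f (a + i)%N) b.
Proof.
elim: b => [|b IH]; first by rewrite addn0 /ps [X in _ = _ + X]big_geq // addr0.
by rewrite addnS /ps !big_nat_recr //= -!/(ps _ _) IH addrA.
Qed.

Lemma ps_sub (R : realFieldType) (f g : nat -> R) k :
  ps (fun i => f i - g i) k = ps f k - ps g k.
Proof. by rewrite /ps sumrB. Qed.

Lemma ps_const (R : realFieldType) (f : nat -> R) c k :
  (forall i, (i < k)%N -> f i = c) -> ps f k = k%:R * c.
Proof.
move=> h; rewrite /ps (eq_big_nat _ _ (F2 := fun _ => c)); last first.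
  by move=> i /andP[_ hi]; rewrite h.
by rewrite sumr_const_nat subn0 mulr_natl.
Qed.

Lemma exmax (R : realFieldType) (F : nat -> R) m :
  exists2 i, (i <= m)%N & forall j, (j <= m)%N -> F j <= F i.
Proof.
elim: m => [|m [i hi IH]].
  by exists 0%N => // j; rewrite leqn0 => /eqP ->.
have [h|h] := leP (F i) (F m.+1).
  exists m.+1 => // j; rewrite leq_eqVlt => /orP[/eqP -> //|hj].
  by apply: le_trans h; apply: IH.
exists i; first by apply: leqW.
move=> j; rewrite leq_eqVlt => /orP[/eqP -> |hj]; first exact: ltW.
exact: IH.
Qed.


Lemma ps_ext (R : realFieldType) (f g : nat -> R) k :
  (forall i, (i < k)%N -> f i = g i) -> ps f k = ps g k.
Proof. by move=> h; apply: eq_big_nat => i /andP[_ hi]; apply: h. Qed.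

Lemma proj_ex (R : realFieldType) (n : nat) : forall v : nat -> R, exists p : nat -> R,
 [/\ decn n p,
   (forall k, (k <= n)%N -> ps (fun i => v i - p i) k <= 0),
   ps (fun i => v i - p i) n = 0,
   (forall k, (k.+1 < n)%N -> p k.+1 < p k -> ps (fun i => v i - p i) k.+1 = 0)
  & (forall M, (0 < n)%N -> (forall k, (0 < k <= n)%N -> ps v k <= k%:R * M) -> p 0%N <= M)].
Proof.
elim/ltn_ind: n => -[|m] IH v.
  exists (fun _ => 0); split.
  - by move=> i j _.
  - by move=> k; rewrite leqn0 => /eqP ->; rewrite /ps big_geq.
  - by rewrite /ps big_geq.
  - by [].
  - by [].
have [i0 hi0 hmax] := @exmax R (fun i => ps v i.+1 / i.+1%:R) m.
set K := i0.+1.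
set mu := ps v K / K%:R.
have hKpos : K%:R != 0 :> R by rewrite pnatr_eq0.
have hvK : ps v K = K%:R * mu by rewrite /mu mulrC divfK.
have hKle : (K <= m.+1)%N by [].
have hvk : forall k, (k <= m.+1)%N -> ps v k <= k%:R * mu.
  move=> [|k] hk; first by rewrite /ps big_geq // mul0r.
  have := hmax k hk => /=.
  by rewrite ler_pdivrMr ?ltr0n // mulrC.
have hlt : (m.+1 - K < m.+1)%N by rewrite ltn_subrL.
have [q [hq1 hq2 hq3 hq4 hq5]] := IH _ hlt (fun i => v (K + i)%N).
set N' := (m.+1 - K)%N in hq1 hq2 hq3 hq4 hq5.
have hpsT : forall k, (k <= N')%N -> ps (fun i => v (K + i)%N) k = ps v (K + k) - ps v K.
  by move=> k hk; rewrite ps_add addrC addKr.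
have hq0 : forall j, (j < N')%N -> q j <= mu.
  move=> j hj; have h0 : q j <= q 0%N by apply: hq1.
  suff h1 : q 0%N <= mu by exact: le_trans h0 h1.
  apply: hq5; first by apply: leq_ltn_trans hj.
  move=> k /andP[_ hk]; rewrite hpsT // hvK lerBlDr.
  rewrite -mulrDl -natrD addnC; apply: hvk; lia.
exists (fun i => if (i < K)%N then mu else q (i - K)%N).
have psle : forall k, (k <= K)%N ->
   ps (fun i => v i - (if (i < K)%N then mu else q (i - K)%N)) k = ps v k - k%:R * mu.
  move=> k hk; rewrite ps_sub; congr (_ - _); apply: ps_const => i hi.
  by rewrite (leq_trans hi hk).
have psge : forall k, (K <= k)%N ->
   ps (fun i => v i - (if (i < K)%N then mu else q (i - K)%N)) k =
   ps (fun i => v (K + i)%N - q i) (k - K).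
  move=> k hk; rewrite -(subnKC hk) ps_add psle // -hvK subrr add0r addKn.
  apply: ps_ext => i _; rewrite ltnNge leq_addr /= addKn //.
split.
- move=> i j hij hj.
  case: (ltnP j K) => hjK; first by rewrite (leq_ltn_trans hij hjK).
  case: (ltnP i K) => hiK.
    apply: hq0; rewrite /N'; move: hj hjK; rewrite /K; clear -i0 m; lia.
  apply: hq1; rewrite /N'; move: hij hj hjK hiK; rewrite /K; clear -i0 m; lia.
- move=> k hk; case: (leqP k K) => hkK.
    rewrite psle // subr_le0; exact: hvk.
  rewrite psge; last exact: ltnW.
  apply: hq2; rewrite /N'; move: hk hkK; rewrite /K; clear -i0 m; lia.
- by rewrite psge // hq3.
- move=> k hk; case: (ltnP k.+1 K) => hkK.
    by rewrite (ltn_trans (ltnSn k) hkK) ltxx.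
  rewrite leq_eqVlt in hkK; case/orP: hkK => [/eqP hK _|hkK].
    by rewrite -hK psle // hvK subrr.
  have hKk : (K <= k)%N by rewrite -ltnS.
  rewrite ltnNge hKk /= => hlt2.
  rewrite psge; last exact: ltnW.
  rewrite (subSn hKk) in hlt2 *.
  apply: hq4 => //; rewrite /N'; move: hk hKk; rewrite /K; clear -i0 m; lia.
- move=> M _ hM; rewrite /=.
  have := hM K hKle; rewrite hvK ler_pM2l ?ltr0n //.
Qed.


Lemma proj_opt (R : realFieldType) n (v p q : nat -> R) :
  decn n p ->
  (forall k, (k <= n)%N -> ps (fun i => v i - p i) k <= 0) ->
  ps (fun i => v i - p i) n = 0 ->
  (forall k, (k.+1 < n)%N -> p k.+1 < p k -> ps (fun i => v i - p i) k.+1 = 0) ->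
  decn n q ->
  \sum_(0 <= i < n) (v i - p i) ^+ 2 + \sum_(0 <= i < n) (p i - q i) ^+ 2 <=
  \sum_(0 <= i < n) (v i - q i) ^+ 2.
Proof.
move=> hp1 hp2 hp3 hp4 hq.
have e0 : \sum_(0 <= i < n) p i * (v i - p i) = 0 by apply: abel_eq0.
have e1 : 0 <= \sum_(0 <= i < n) q i * (- (v i - p i)).
  have psN : forall k, ps (fun i => - (v i - p i)) k = - ps (fun i => v i - p i) k.
    by move=> k; rewrite /ps sumrN.
  apply: abel_ge0 => //; first by rewrite psN hp3 oppr0.
  by move=> k hk; rewrite psN oppr_ge0; apply: hp2; apply: ltnW.
have e2 : \sum_(0 <= i < n) (v i - q i) ^+ 2 =
   \sum_(0 <= i < n) (v i - p i) ^+ 2 + \sum_(0 <= i < n) (p i - q i) ^+ 2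
   + 2 * \sum_(0 <= i < n) p i * (v i - p i)
   + 2 * \sum_(0 <= i < n) q i * (- (v i - p i)).
  rewrite !mulr_sumr -!big_split /=; apply: eq_bigr => i _; ring.
rewrite e2 e0; lra.
Qed.

Definition tn (R : realFieldType) n (x : 'cV[R]_n) : nat -> R :=
  fun i => if insub i is Some j then x j 0 else 0.
Arguments tn {R n} x _.

Lemma tnE (R : realFieldType) n (x : 'cV[R]_n) (j : 'I_n) : tn x j = x j 0.
Proof. by rewrite /tn valK. Qed.

Lemma sqdist_tn (R : realFieldType) n (x y : 'cV[R]_n) :
  sqdist x y = \sum_(0 <= i < n) (tn x i - tn y i) ^+ 2.
Proof. by rewrite /sqdist big_mkord; apply: eq_bigr => i _; rewrite !tnE. Qed.

Lemma inD_tn (R : realFieldType) n (x : 'cV[R]_n) : inD x <-> decn n (tn x).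
Proof.
split=> h.
  move=> i j hij hj; have hi : (i < n)%N by apply: leq_ltn_trans hj.
  by rewrite -[i]/(nat_of_ord (Ordinal hi)) -[j]/(nat_of_ord (Ordinal hj)) !tnE; apply: h.
by move=> i j hij; rewrite -!tnE; apply: h.
Qed.

Lemma sqdist_ge0 (R : realFieldType) n (x y : 'cV[R]_n) : 0 <= sqdist x y.
Proof. by apply: sumr_ge0 => i _; apply: sqr_ge0. Qed.

Lemma sqdist_eq0 (R : realFieldType) n (x y : 'cV[R]_n) : sqdist x y <= 0 -> x = y.
Proof.
move=> h; have h0 : sqdist x y = 0 by apply/eqP; rewrite eq_le h sqdist_ge0.
apply/matrixP => i j; rewrite (ord1 j).
move/eqP: h0; rewrite psumr_eq0; last by move=> k _; apply: sqr_ge0.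
move/allP => /(_ i (mem_index_enum _)) /implyP /(_ isT).
by rewrite sqrf_eq0 subr_eq0 => /eqP.
Qed.

Lemma proj_cV (R : realFieldType) n (v : 'cV[R]_n) :
  exists p, is_projD v p /\ forall q, is_projD v q -> q = p.
Proof.
have [pn [h1 h2 h3 h4 _]] := @proj_ex R n (tn v).
pose P : 'cV[R]_n := \col_(i < n) pn i.
have tP : forall i, (i < n)%N -> tn P i = pn i.
  by move=> i hi; rewrite -[i]/(nat_of_ord (Ordinal hi)) tnE mxE.
have eqs : forall F : nat -> R -> R,
   \sum_(0 <= i < n) F i (tn P i) = \sum_(0 <= i < n) F i (pn i).
  by move=> F; apply: eq_big_nat => i /andP[_ hi]; rewrite tP.
have decP : decn n (tn P).
  by move=> i j hij hj; rewrite !tP //; [apply: h1|apply: leq_ltn_trans hj].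
have opt : forall q, inD q -> sqdist v P + sqdist P q <= sqdist v q.
  move=> q /inD_tn hq; rewrite !sqdist_tn.
  rewrite (eqs (fun i t => (tn v i - t) ^+ 2)) (eqs (fun i t => (t - tn q i) ^+ 2)).
  exact: proj_opt.
have pP : is_projD v P.
  split; first by apply/inD_tn.
  move=> q hq; apply: le_trans (opt q hq); rewrite lerDl; exact: sqdist_ge0.
exists P; split => // q [hq1 hq2].
have := opt q hq1; have := hq2 P pP.1 => h h'.
apply/esym/sqdist_eq0; lra.
Qed.


Lemma pmxE (R : realFieldType) n (s : 'S_n) (x : 'cV[R]_n) i :
  (perm_mx s *m x) i 0 = x (s i) 0.
Proof. by rewrite -row_permE mxE. Qed.

Lemma pp_sym (R : realFieldType) n (x : 'cV[R]_n) :
  \sum_i \sum_j `|x i 0 - x j 0| = 2 * pairpen x.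
Proof.
set f := fun i j : 'I_n => `|x i 0 - x j 0|.
have e : forall i : 'I_n, \sum_j f i j = \sum_(j : 'I_n | (i < j)%N) f i j + \sum_(j : 'I_n | (j < i)%N) f i j.
  move=> i; rewrite (bigID (fun j : 'I_n => (i < j)%N)) /=; congr (_ + _).
  rewrite (bigID (fun j : 'I_n => (j < i)%N)) /= [X in _ + X]big1 ?addr0.
    by apply: eq_bigl => j; case: ltngtP.
  move=> j; case: ltngtP => // /val_inj -> _.
  by rewrite /f subrr normr0.
rewrite (eq_bigr _ (fun i _ => e i)) big_split /=.
transitivity (pairpen x + pairpen x); last by ring.
congr (_ + _).
rewrite (exchange_big_dep (fun j : 'I_n => true)) //=.
by apply: eq_bigr => i _; apply: eq_bigr => j _; rewrite /f distrC.
Qed.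

Lemma pp_perm (R : realFieldType) n (s : 'S_n) (x : 'cV[R]_n) :
  pairpen (perm_mx s *m x) = pairpen x.
Proof.
apply: (@mulfI _ 2); first by rewrite pnatr_eq0.
rewrite -!pp_sym (reindex_inj (@perm_inj _ s^-1)) /=.
apply: eq_bigr => i _; rewrite (reindex_inj (@perm_inj _ s^-1)) /=.
by apply: eq_bigr => j _; rewrite !pmxE !permKV.
Qed.

Lemma sqdist_perm (R : realFieldType) n (s : 'S_n) (x y : 'cV[R]_n) :
  sqdist (perm_mx s *m x) (perm_mx s *m y) = sqdist x y.
Proof.
rewrite /sqdist (reindex_inj (@perm_inj _ s^-1)) /=.
by apply: eq_bigr => i _; rewrite !pmxE !permKV.
Qed.

Lemma natw (R : realFieldType) (k : nat) : ((2 * k + 1)%:R : R) = 2 * k%:R + 1.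
Proof. by change ((2 * k + 1)%N%:R = 2 * k%:R + 1 :> R); rewrite natrD natrM. Qed.

Lemma pw_nat (R : realFieldType) (z : nat -> R) n :
  \sum_(0 <= i < n) \sum_(0 <= j < n | (i < j)%N) (z i - z j) =
  \sum_(0 <= i < n) (n%:R - (2 * i + 1)%:R) * z i.
Proof.
elim: n => [|n IH]; first by rewrite !big_geq.
rewrite big_nat_recr //= [X in _ = X]big_nat_recr //=.
have inner : forall i, (0 <= i < n)%N ->
   \sum_(0 <= j < n.+1 | (i < j)%N) (z i - z j) =
   \sum_(0 <= j < n | (i < j)%N) (z i - z j) + (z i - z n).
  by move=> i /andP[_ hi]; rewrite big_mkcond big_nat_recr //= -big_mkcond hi.
have last0 : \sum_(0 <= j < n.+1 | (n < j)%N) (z n - z j) = 0.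
  rewrite big_mkcond big1_seq // => j; rewrite mem_iota add0n subn0 => /andP[_ hj].
  by case: ltnP => // h; move: (leq_ltn_trans h hj); rewrite ltnn.
rewrite (eq_big_nat _ _ inner) last0 addr0 big_split /= IH sumrB sumr_const_nat subn0.
have e2 : \sum_(0 <= i < n) (n.+1%:R - (2 * i + 1)%:R) * z i =
   \sum_(0 <= i < n) (n%:R - (2 * i + 1)%:R) * z i + \sum_(0 <= i < n) z i.
  rewrite -big_split /=; apply: eq_bigr => i _; rewrite mulrS; ring.
rewrite e2 -mulr_natl natw mulrS; ring.
Qed.

Lemma pp_ge (R : realFieldType) n (x : 'cV[R]_n) :
  \sum_(i < n) wvec R n i 0 * x i 0 <= pairpen x.
Proof.
have -> : \sum_(i < n) wvec R n i 0 * x i 0 = \sum_(i < n) \sum_(j < n | (i < j)%N) (x i 0 - x j 0).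
  have h1 := @pw_nat R (tn x) n.
  rewrite [RHS](eq_bigr (fun i : 'I_n => \sum_(0 <= j < n | (i < j)%N) (tn x i - tn x j))); last first.
    by move=> i _; rewrite big_mkord; apply: eq_bigr => j _; rewrite !tnE.
  rewrite -(big_mkord xpredT (fun i => \sum_(0 <= j < n | (i < j)%N) (tn x i - tn x j))) h1 big_mkord.
  by apply: eq_bigr => i _; rewrite mxE tnE.
apply: ler_sum => i _; apply: ler_sum => j _; exact: ler_norm.
Qed.

Lemma pp_eq (R : realFieldType) n (x : 'cV[R]_n) : inD x ->
  pairpen x = \sum_(i < n) wvec R n i 0 * x i 0.
Proof.
move=> hx; apply/eqP; rewrite eq_le pp_ge andbT.
have -> : \sum_(i < n) wvec R n i 0 * x i 0 = \sum_(i < n) \sum_(j < n | (i < j)%N) (x i 0 - x j 0).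
  have h1 := @pw_nat R (tn x) n.
  rewrite [RHS](eq_bigr (fun i : 'I_n => \sum_(0 <= j < n | (i < j)%N) (tn x i - tn x j))); last first.
    by move=> i _; rewrite big_mkord; apply: eq_bigr => j _; rewrite !tnE.
  rewrite -(big_mkord xpredT (fun i => \sum_(0 <= j < n | (i < j)%N) (tn x i - tn x j))) h1 big_mkord.
  by apply: eq_bigr => i _; rewrite mxE tnE.
apply: ler_sum => i _; apply: ler_sum => j hij.
by rewrite ger0_norm // subr_ge0; apply: hx; apply: ltnW.
Qed.


Lemma sort_perm (R : realFieldType) n (x : 'cV[R]_n) :
  exists s : 'S_n, inD (perm_mx s *m x).
Proof.
pose t := [tuple x i 0 | i < n].
pose ge := fun a b : R => b <= a.
have hp : perm_eq (sort ge t) t by rewrite perm_sort perm_refl.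
have [s hs] := tuple_permP hp.
have hsort : sorted ge (sort ge t) by apply: sort_sorted => a b; exact: le_total.
have e : forall k : 'I_n, x (s k) 0 = nth 0 (sort ge t) k.
  by move=> k; rewrite hs -tnth_nth !tnth_mktuple.
exists s => i j hij; rewrite !pmxE !e.
apply: (sorted_leq_nth _ _ _ hsort) => //.
- by move=> a b c h1 h2; exact: le_trans h2 h1.
- by move=> a; exact: le_refl.
- by rewrite inE size_sort size_tuple.
- by rewrite inE size_sort size_tuple.
Qed.

Lemma topk (R : realFieldType) n (c : 'cV[R]_n) (s : 'S_n) K : inD c -> (K <= n)%N ->
  \sum_(i < n | (i < K)%N) c (s i) 0 <= \sum_(i < n | (i < K)%N) c i 0.
Proof.
move=> hc; case: K => [_|k hk]; first by rewrite !big1 // => i; rewrite ltn0.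
pose t := c (Ordinal hk) 0.
pose f := fun i : 'I_n => c i 0 - t.
have spl : forall g : 'I_n -> 'I_n, \sum_(i < n | (i < k.+1)%N) c (g i) 0 =
    \sum_(i < n | (i < k.+1)%N) f (g i) + \sum_(i < n | (i < k.+1)%N) t.
  by move=> g; rewrite -big_split /=; apply: eq_bigr => i _; rewrite /f subrK.
rewrite (spl s) (spl (fun i => i)) lerD2r.
have fpos : forall i : 'I_n, (i < k.+1)%N -> 0 <= f i.
  by move=> i hi; rewrite /f subr_ge0; apply: hc.
have fneg : forall i : 'I_n, ~~ (i < k.+1)%N -> f i <= 0.
  by move=> i; rewrite -leqNgt => hi; rewrite /f subr_le0; apply: hc; apply: ltnW.
apply: (@le_trans _ _ (\sum_(i < n | (i < k.+1)%N) (if (s i < k.+1)%N then f (s i) else 0))).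
  by apply: ler_sum => i _; case: ifP => // h; apply: fneg; rewrite h.
apply: (@le_trans _ _ (\sum_(i < n) (if (s i < k.+1)%N then f (s i) else 0))).
  rewrite [X in _ <= X](bigID (fun i : 'I_n => (i < k.+1)%N)) /= lerDl.
  by apply: sumr_ge0 => i _; case: ifP => // h; apply: fpos.
have -> : \sum_(i < n) (if (s i < k.+1)%N then f (s i) else 0) =
    \sum_(i < n) (if (i < k.+1)%N then f i else 0).
  by rewrite [RHS](reindex_inj (@perm_inj _ s)).
by rewrite -big_mkcond.
Qed.

Lemma rearr (R : realFieldType) n (z c : 'cV[R]_n) (s : 'S_n) : inD z -> inD c ->
  \sum_i z i 0 * c (s i) 0 <= \sum_i z i 0 * c i 0.
Proof.
move=> hz hc.
pose a := fun k => tn c k - tn (perm_mx s *m c) k.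
have psa : forall K, (K <= n)%N -> ps a K =
    \sum_(i < n | (i < K)%N) c i 0 - \sum_(i < n | (i < K)%N) c (s i) 0.
  move=> K hK; rewrite /ps (big_nat_widen _ _ _ _ _ hK) big_mkord -sumrB.
  by apply: eq_bigr => i _; rewrite /a !tnE pmxE.
have h : 0 <= \sum_(0 <= i < n) tn z i * a i.
  apply: abel_ge0.
  - by apply/inD_tn.
  - rewrite psa //; apply/eqP; rewrite subr_eq0; apply/eqP.
    rewrite [LHS](reindex_inj (@perm_inj _ s)) /=.
    by apply: eq_bigl => i; rewrite !ltn_ord.
  - move=> k hk; rewrite psa; last exact: ltnW.
    by rewrite subr_ge0; apply: topk => //; apply: ltnW.
move: h; rewrite big_mkord (eq_bigr (fun i : 'I_n => z i 0 * c i 0 - z i 0 * c (s i) 0)).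
  by rewrite sumrB subr_ge0.
by move=> i _; rewrite /a !tnE pmxE mulrBr.
Qed.

Arguments sort_perm {R n}. Arguments rearr {R n}. Arguments sqdist_perm {R n}. Arguments pp_perm {R n}. Arguments pp_eq {R n}.

Lemma sqdist_exp (R : realFieldType) n (a b : 'cV[R]_n) :
  sqdist a b = \sum_i a i 0 ^+ 2 - 2 * \sum_i a i 0 * b i 0 + \sum_i b i 0 ^+ 2.
Proof.
rewrite mulr_sumr -sumrB -big_split /=; apply: eq_bigr => i _; ring.
Qed.

Lemma sq_sort (R : realFieldType) n (rho : R) (yt u : 'cV[R]_n) : inD yt ->
  exists z, inD z /\ Sobj rho yt z <= Sobj rho yt u.
Proof.
move=> hy; have [s hs] := sort_perm u.
exists (perm_mx s *m u); split => //.
rewrite /Sobj pp_perm lerD2r ler_pM2l ?invr_gt0 ?ltr0n //.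
rewrite -(sqdist_perm s u yt) !sqdist_exp.
have e1 : \sum_i (perm_mx s *m yt) i 0 ^+ 2 = \sum_i yt i 0 ^+ 2.
  rewrite [RHS](reindex_inj (@perm_inj _ s)) /=.
  by apply: eq_bigr => i _; rewrite pmxE.
have e2 : \sum_i (perm_mx s *m u) i 0 * (perm_mx s *m yt) i 0 =
   \sum_i (perm_mx s *m u) i 0 * yt (s i) 0.
  by apply: eq_bigr => i _; rewrite [(perm_mx s *m yt) _ _]pmxE.
have := rearr _ _ s hs hy.
rewrite e1 e2; lra.
Qed.

Lemma sobj_D (R : realFieldType) n (rho : R) (yt z : 'cV[R]_n) : inD z ->
  Sobj rho yt z = 2^-1 * sqdist (yt - rho *: wvec R n) z +
     \sum_i (rho * (wvec R n i 0 * yt i 0) - 2^-1 * rho ^+ 2 * wvec R n i 0 ^+ 2).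
Proof.
move=> hz; rewrite /Sobj pp_eq // /sqdist !mulr_sumr -!big_split /=.
apply: eq_bigr => i _; rewrite !mxE; move: (_ - (2 * i + 1)%:R) => c. by field.
Qed.

Lemma sobj_conv (R : realFieldType) n (rho : R) (y a b : 'cV[R]_n) : 0 <= rho ->
  Sobj rho y (2^-1 *: (a + b)) <=
  2^-1 * (Sobj rho y a + Sobj rho y b) - 8^-1 * sqdist a b.
Proof.
move=> hr.
have hsq : 2^-1 * sqdist (2^-1 *: (a + b)) y =
    4^-1 * sqdist a y + 4^-1 * sqdist b y - 8^-1 * sqdist a b.
  rewrite /sqdist !mulr_sumr -big_split -sumrB /=.
  apply: eq_bigr => i _; rewrite !mxE; by field.
have hpp : pairpen (2^-1 *: (a + b)) <= 2^-1 * pairpen a + 2^-1 * pairpen b.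
  rewrite /pairpen !mulr_sumr -big_split /=; apply: ler_sum => i _.
  rewrite !mulr_sumr -big_split /=; apply: ler_sum => j _.
  rewrite !mxE.
  have -> : 2^-1 * (a i 0 + b i 0) - 2^-1 * (a j 0 + b j 0) =
     2^-1 * ((a i 0 - a j 0) + (b i 0 - b j 0)) by ring.
  rewrite normrM ger0_norm ?invr_ge0 ?ler0n // -mulrDr.
  by rewrite ler_wpM2l ?invr_ge0 ?ler0n // ler_normD.
have := ler_wpM2l hr hpp.
rewrite /Sobj hsq; lra.
Qed.

Arguments proj_cV {R n}. Arguments sq_sort {R n}. Arguments sobj_D {R n}. Arguments sobj_conv {R n}. Arguments sqdist_ge0 {R n}. Arguments sqdist_eq0 {R n}. Arguments sqdist_perm {R n}. Arguments pp_perm {R n}.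

Theorem mainTheorem3 (R : realFieldType) (n : nat) (rho : R) (y : 'cV[R]_n)
    (s : 'S_n) :
  0 < rho ->
  inD (perm_mx s *m y) ->
  exists p : 'cV[R]_n,
    [/\ is_projD (perm_mx s *m y - rho *: wvec R n) p,
        (forall q, is_projD (perm_mx s *m y - rho *: wvec R n) q -> q = p)
      & (forall x : 'cV[R]_n, is_S rho y x <-> x = (perm_mx s)^T *m p)].
Proof.
move=> hrho hyD.
have [P [hP huniq]] := proj_cV (perm_mx s *m y - rho *: wvec R n).
exists P; split => //.
set yt := perm_mx s *m y.
have K1 : forall x, Sobj rho y x = Sobj rho yt (perm_mx s *m x).
  by move=> x; rewrite /Sobj /yt sqdist_perm pp_perm.
have hPP : perm_mx s *m ((perm_mx s)^T *m P) = P.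
  by rewrite tr_perm_mx mulmxA -perm_mxM mulgV perm_mx1 mul1mx.
have hS : is_S rho y ((perm_mx s)^T *m P).
  move=> x; rewrite !K1 hPP.
  have [z [hz hzu]] := sq_sort rho yt (perm_mx s *m x) hyD.
  apply: le_trans hzu.
  rewrite !sobj_D //; last exact: hP.1.
  rewrite lerD2r ler_pM2l ?invr_gt0 ?ltr0n //.
  exact: hP.2.
move=> x; split; last by move=> ->.
move=> hx.
have h1 := hx ((perm_mx s)^T *m P).
have h2 := hS x.
have h3 := hS (2^-1 *: (x + (perm_mx s)^T *m P)).
have h4 := sobj_conv rho y x ((perm_mx s)^T *m P) (ltW hrho).
have h5 := sqdist_ge0 x ((perm_mx s)^T *m P).
apply: sqdist_eq0; lra.
Qed.
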